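(* With the notation below, there exists a strategy (ancilla $E$, unitary $U$ on $AE=B_0B_1B'$, projective measurement $\{R^{b'}\}_{b'\in\{0,1\}}$ on $B'$, and projective measurements $\{\Pi^{\mathbf e}_{i\mathbf s b'}\}_{\mathbf e\in\{0,1\}^n}$ on $B_i$) achieving $p_n=\bigl(\frac34\bigr)^n$ for every $n\ge1$. Notation: for $a\in\{0,1\}$, $\lvert \hat a\rangle=\frac{1}{\sqrt2}(\lvert 0\rangle+(-1)^a\lvert 1\rangle)$; for bits $r_0,r_1,s$, $\lvert\psi^{s}_{r_0r_1}\rangle_{A_0A_1}=\lvert r_0\rangle_{A_s}\otimes\lvert \hat r_1\rangle_{A_{\bar s}}$; for strings $\mathbf r_0,\mathbf r_1,\mathbf s\in\{0,1\}^n$, $\lvert\Psi^{\mathbf s}_{\mathbf r_0\mathbf r_1}\rangle_A=\bigotimes_{j=1}^n\lvert\psi^{s^j}_{r_0^jr_1^j}\rangle_{A_0^jA_1^j}$. A strategy consists of a finite-dimensional ancilla $E$ in a pure state $\lvert\chi\rangle$, a unitary $U$ on $AE$ with $AE=B_0B_1B'$ (finite-dimensional subsystems), a projective measurement $\{R^{b'}\}$ on $B'$, and for each $i,\mathbf s,b'$ a projective measurement $\{\Pi^{\mathbf e}_{i\mathbf s b'}\}_{\mathbf e\in\{0,1\}^n}$ on $B_i$; with $\lvert\Phi^{\mathbf s}_{\mathbf r_0\mathbf r_1}\rangle=U(\lvert\Psi^{\mathbf s}_{\mathbf r_0\mathbf r_1}\rangle\otimes\lvert\chi\rangle)$, $$p_n=\frac{1}{2^{3n}}\sum_{\mathbf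 r_0,\mathbf r_1,\mathbf s}\sum_{b'}\langle\Phi^{\mathbf s}_{\mathbf r_0\mathbf r_1}\rvert\,\Pi^{\mathbf r_{b'}}_{0\mathbf s b'}\otimes\Pi^{\mathbf r_{\bar b'}}_{1\mathbf s b'}\otimes R^{b'}\,\lvert\Phi^{\mathbf s}_{\mathbf r_0\mathbf r_1}\rangle.$$
   Context: $p_n$ is the probability that Bob simultaneously guesses $\mathbf r_{b'}$ from $B_0$ and $\mathbf r_{\bar b'}$ from $B_1$ for uniformly random $\mathbf r_0,\mathbf r_1,\mathbf s$, where $\bar b'=b'\oplus1$. *)

(* Defs.v *)
From mathcomp Require Import all_boot all_order all_algebra.
From mathcomp Require Import mxtens.
Set Implicit Arguments. Unset Strict Implicit. Unset Printing Implicit Defensive.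
Import Order.TTheory GRing.Theory Num.Theory.
Local Open Scope ring_scope.

Section Q.
Variable C : numClosedFieldType.

Definition adjmx {m n} (A : 'M[C]_(m, n)) : 'M[C]_(n, m) := (map_mx Num.conj A)^T.

Definition ket (a : bool) : 'cV[C]_2 := delta_mx (if a then 1 else 0) 0.

Definition kethat (a : bool) : 'cV[C]_2 :=
  (sqrtC 2)^-1 *: (ket false + (-1) ^+ a *: ket true).

(* |psi^s_{r0 r1}>_{A0 A1} = |r0>_{A_s} (x) |hat r1>_{A_{1-s}}, with the
   tensor factor A0 written first *)
Definition psi (s r0 r1 : bool) : 'cV[C]_(2 * 2) :=
  if s then tensmx (kethat r1) (ket r0) else tensmx (ket r0) (kethat r1).

Lemma Psi_dim (k : nat) : (((2 * 2 * 4 ^ k)%N = (4 ^ k.+1)%N) * ((1 * 1)%N = 1%N))%type.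
Proof. by rewrite expnS. Qed.

Lemma col_dim (m : nat) : ((m = m) * ((1 * 1)%N = 1%N))%type.
Proof. by []. Qed.

Fixpoint Psi_rec (k : nat) (f : nat -> bool * bool * bool) : 'cV[C]_(4 ^ k) :=
  match k return 'cV[C]_(4 ^ k) with
  | 0 => 1%:M
  | k'.+1 => castmx (Psi_dim k')
               (tensmx (psi (f 0%N).1.1 (f 0%N).1.2 (f 0%N).2)
                       (Psi_rec k' (fun j => f j.+1)))
  end.

Definition Psi (n : nat) (s r0 r1 : n.-tuple bool) : 'cV[C]_(4 ^ n) :=
  Psi_rec n (fun j => (nth false s j, nth false r0 j, nth false r1 j)).

Definition unitary_mx {m n} (U : 'M[C]_(m, n)) : Prop :=
  adjmx U *m U = 1%:M /\ U *m adjmx U = 1%:M.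

Definition unit_vector {d} (v : 'cV[C]_d) : Prop := adjmx v *m v = 1%:M.

Definition projective_measurement (I : finType) {d} (P : I -> 'M[C]_d) : Prop :=
  (forall e, adjmx (P e) = P e) /\ (forall e, P e *m P e = P e) /\
  \sum_(e : I) P e = 1%:M.

Definition p_n (n dE d0 d1 d' : nat) (chi : 'cV[C]_dE)
  (U : 'M[C]_(d0 * d1 * d', 4 ^ n * dE)) (R : bool -> 'M[C]_d')
  (Pi0 : n.-tuple bool -> bool -> n.-tuple bool -> 'M[C]_d0)
  (Pi1 : n.-tuple bool -> bool -> n.-tuple bool -> 'M[C]_d1) : C :=
  (2 ^+ (3 * n))^-1 *
  \sum_(r0 : n.-tuple bool) \sum_(r1 : n.-tuple bool) \sum_(s : n.-tuple bool)
   \sum_(b' : bool)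
    let Phi := U *m castmx (col_dim _) (tensmx (Psi s r0 r1) chi) in
    let r := fun b : bool => if b then r1 else r0 in
    (adjmx Phi *m (tensmx (tensmx (Pi0 s b' (r b')) (Pi1 s b' (r (~~ b'))))
                          (R b')) *m Phi) 0 0.

End Q.

(* Main.v *)
Require Import Defs.
From mathcomp Require Import all_boot all_order all_algebra.
From mathcomp Require Import mxtens.
From mathcomp Require Import ring fingroup perm.
Set Implicit Arguments. Unset Strict Implicit. Unset Printing Implicit Defensive.
Import Order.TTheory GRing.Theory Num.Theory.
Local Open Scope ring_scope.


Definition Kn (y k : nat) : int :=
  match y, k with
  | 0, 0 => 2 | 0, 1 => 1 | 0, 2 => -1 | 0, _ => 0
  | 1, 0 => 1 | 1, 1 => -2 | 1, 2 => 0 | 1, _ => -1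
  | 2, 0 => 1 | 2, 1 => 0 | 2, 2 => 2 | 2, _ => 1
  | _, 0 => 0 | _, 1 => 1 | _, 2 => 1 | _, _ => -2
  end.

Definition Jn (s r0 r1 : bool) (y : nat) : int :=
  if s then (if odd y == r0 then (if r1 && (1 < y)%N then -1 else 1) else 0)
  else (if (1 < y)%N == r0 then (if r1 && odd y then -1 else 1) else 0).

Definition g0 (s : bool) (d : nat) : bool := if s then odd d else (1 < d)%N.
Definition g1 (s : bool) (d : nat) : bool := if s then (1 < d)%N (+) odd d else odd d.

Lemma KK (i j : 'I_(2*2)) :
  (\sum_(y < 2*2) Kn y i * Kn y j = (i == j)%:R * 6)%R.
Proof.
rewrite !big_ord_recl big_ord0 /=.
case: i => [[|[|[|[|i]]]] Hi] //; case: j => [[|[|[|[|j]]]] Hj] //.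
Qed.

Lemma KJ (s : bool) (d : 'I_(2*2)) :
  let v := (\sum_(y < 2*2) Kn y d * Jn s (g0 s d) (g1 s d) y)%R in v * v = 9.
Proof.
rewrite /= !big_ord_recl big_ord0 /=.
by case: s; case: d => [[|[|[|[|i]]]] Hi].
Qed.


Lemma psiE (C : numClosedFieldType) s r0 r1 :
  psi C s r0 r1 = (sqrtC 2)^-1 *: (\col_(y < 2*2) ((Jn s r0 r1 y)%:~R : C)).
Proof.
apply/matrixP => y z; rewrite [z]ord1 /psi.
case: s; rewrite ?mxE /= /kethat /ket ?mxE -!val_eqE /=.
all: case: y => [[|[|[|[|y]]]] Hy] //=.
all: case: r0; case: r1 => /=; ring.
Qed.


Lemma adjmxE {C : numClosedFieldType} m n (A : 'M[C]_(m, n)) i j :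
  adjmx A i j = (A j i)^*.
Proof. by rewrite /adjmx !mxE. Qed.

Lemma adjmxM {C : numClosedFieldType} m n p (A : 'M[C]_(m, n)) (B : 'M[C]_(n, p)) :
  adjmx (A *m B) = adjmx B *m adjmx A.
Proof. by rewrite /adjmx map_mxM trmx_mul. Qed.

Lemma adjmxK {C : numClosedFieldType} m n (A : 'M[C]_(m, n)) :
  adjmx (adjmx A) = A.
Proof. by apply/matrixP => i j; rewrite !adjmxE conjCK. Qed.

Lemma adjmx1 {C : numClosedFieldType} n : adjmx (1%:M : 'M[C]_n) = 1%:M.
Proof. by apply/matrixP => i j; rewrite !adjmxE !mxE eq_sym conjC_nat. Qed.

Lemma adjmx0 {C : numClosedFieldType} m n : adjmx (0 : 'M[C]_(m,n)) = 0.
Proof. by apply/matrixP => i j; rewrite !adjmxE !mxE conjC0. Qed.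

Lemma adjmxZ {C : numClosedFieldType} m n (a : C) (A : 'M[C]_(m, n)) :
  adjmx (a *: A) = a^* *: adjmx A.
Proof. by apply/matrixP => i j; rewrite !adjmxE !mxE rmorphM. Qed.

Lemma adjmx_tens {C : numClosedFieldType} m n p q (A : 'M[C]_(m, n)) (B : 'M[C]_(p, q)) :
  adjmx (tensmx A B) = tensmx (adjmx A) (adjmx B).
Proof. by apply/matrixP => i j; rewrite /adjmx !mxE rmorphM. Qed.

Lemma adjmx_cast {C : numClosedFieldType} m n m' n' (e : (m = m') * (n = n')) (A : 'M[C]_(m, n)) :
  adjmx (castmx e A) = castmx (e.2, e.1) (adjmx A).
Proof. by case: e => e1 e2; case: m' / e1; case: n' / e2; rewrite !castmx_id. Qed.

Lemma castmx_mulmx {C : numClosedFieldType} m n p m' n' p' (e1 : m = m') (e2 : n = n') (e3 : p = p')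
  (A : 'M[C]_(m, n)) (B : 'M[C]_(n, p)) :
  castmx (e1, e2) A *m castmx (e2, e3) B = castmx (e1, e3) (A *m B).
Proof. by case: m' / e1; case: n' / e2; case: p' / e3; rewrite !castmx_id. Qed.

Lemma castmx1 {C : numClosedFieldType} m m' (e : m = m') :
  castmx (e, e) (1%:M : 'M[C]_m) = 1%:M.
Proof. by case: m' / e; rewrite castmx_id. Qed.

Lemma tens11 {C : numClosedFieldType} m n :
  tensmx (1%:M : 'M[C]_m) (1%:M : 'M[C]_n) = 1%:M.
Proof.
apply/matrixP => i j.
case: (mxtens_indexP i) => i1 i2; case: (mxtens_indexP j) => j1 j2.
rewrite tensmxE !mxE (can_eq (@mxtens_indexK m n)) xpair_eqE.
by case: (i1 == j1); case: (i2 == j2); rewrite /= ?mulr1 ?mulr0 ?mul0r.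
Qed.

Definition Kmx {C : numClosedFieldType} : 'M[C]_(2*2) := \matrix_(y, k) (Kn y k)%:~R.
Definition wmx {C : numClosedFieldType} : 'M[C]_(2*2) := (sqrtC 6)^-1 *: Kmx.

Lemma sq6 {C : numClosedFieldType} : ((sqrtC 6)^-1)^* = (sqrtC 6)^-1 :> C.
Proof. by rewrite geC0_conj // invr_ge0 sqrtC_ge0 ler0n. Qed.

Lemma adj_w {C : numClosedFieldType} : adjmx (@wmx C) = (sqrtC 6)^-1 *: Kmx^T.
Proof.
rewrite /wmx adjmxZ sq6; congr (_ *: _).
by apply/matrixP => i j; rewrite adjmxE !mxE rmorph_int.
Qed.

Lemma w_unitary {C : numClosedFieldType} : unitary_mx (@wmx C).
Proof.
have H : adjmx (@wmx C) *m wmx = 1%:M.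
  rewrite adj_w /wmx -scalemxAl -scalemxAr scalerA.
  apply/matrixP => i j; rewrite !mxE.
  under eq_bigr => y _ do rewrite !mxE -intrM.
  rewrite -rmorph_sum /= KK.
  rewrite -[(_ * 6)%R]/((((i == j)%:R : int) * 6%:R)%R) rmorphM /=.
  have h6 : sqrtC 6 != 0 :> C by rewrite sqrtC_eq0 pnatr_eq0.
  rewrite -invfM -expr2 sqrtCK.
  case: (i == j); rewrite /= ?mulr1n ?mulr0n; last by rewrite !mul0r mulr0.
  by rewrite mul1r mulVf // pnatr_eq0.
by split => //; apply: mulmx1C.
Qed.


Lemma amp {C : numClosedFieldType} (s : bool) (d : 'I_(2*2)) :
  let a := (adjmx (@wmx C) *m psi C s (g0 s d) (g1 s d)) d 0 in a^* * a = 3%:R / 4%:R.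
Proof.
rewrite /= adj_w psiE -scalemxAl -scalemxAr scalerA.
set v := (\sum_(y < 2*2) Kn y d * Jn s (g0 s d) (g1 s d) y)%R.
have Hv : (v * v = 9)%R by apply: KJ.
have -> : ((sqrtC 6)^-1 * (sqrtC 2)^-1 *: (Kmx^T *m \col_y (Jn s (g0 s d) (g1 s d) y)%:~R)) d 0
   = (sqrtC 6)^-1 * (sqrtC 2)^-1 * (v%:~R : C).
  rewrite !mxE /v rmorph_sum /=; congr (_ * _); apply: eq_bigr => y _.
  by rewrite !mxE intrM.
have h6 : 0 <= (sqrtC 6)^-1 :> C by rewrite invr_ge0 sqrtC_ge0 ler0n.
have h2 : 0 <= (sqrtC 2)^-1 :> C by rewrite invr_ge0 sqrtC_ge0 ler0n.
rewrite !rmorphM /= (geC0_conj h6) (geC0_conj h2) rmorph_int.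
have -> : (sqrtC 6)^-1 * (sqrtC 2)^-1 * (v%:~R : C) * ((sqrtC 6)^-1 * (sqrtC 2)^-1 * v%:~R)
  = ((sqrtC 6) ^+ 2)^-1 * ((sqrtC 2) ^+ 2)^-1 * (v * v)%:~R.
  rewrite intrM -!exprVn; ring.
rewrite !sqrtCK Hv.
have -> : ((9 : int)%:~R : C) = 9%:R by [].
have h6' : 6%:R != 0 :> C by rewrite pnatr_eq0.
have h2' : 2%:R != 0 :> C by rewrite pnatr_eq0.
have h4' : 4%:R != 0 :> C by rewrite pnatr_eq0.
by field.
Qed.


Fixpoint Wrec {C : numClosedFieldType} (k : nat) : 'M[C]_(4 ^ k) :=
  match k return 'M[C]_(4 ^ k) with
  | 0 => 1%:M
  | k'.+1 => castmx ((Psi_dim k').1, (Psi_dim k').1) (tensmx (@wmx C) (Wrec k'))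
  end.

Fixpoint gl (g : bool -> nat -> bool) (k : nat) (f : nat -> bool) (x : nat) : seq bool :=
  match k with
  | 0 => [::]
  | k'.+1 => g (f 0%N) (x %/ 4 ^ k')%N :: gl g k' (fun j => f j.+1) (x %% 4 ^ k')%N
  end.

Lemma size_gl g k f x : size (gl g k f x) = k.
Proof. by elim: k f x => //= k IH f x; rewrite IH. Qed.

Lemma castmx_mulmx2 {C : numClosedFieldType} m n p m' n' p' (e : (n = n') * (p = p')) (e1 : m = m')
  (A : 'M[C]_(m, n)) (B : 'M[C]_(n, p)) :
  castmx (e1, e.1) A *m castmx e B = castmx (e1, e.2) (A *m B).
Proof. by case: e => a b; apply: castmx_mulmx. Qed.

Lemma key {C : numClosedFieldType} k (f : nat -> bool) (x : 'I_(4 ^ k)) :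
  let c := adjmx (@Wrec C k) *m Psi_rec C k
             (fun j => (f j, nth false (gl g0 k f x) j, nth false (gl g1 k f x) j)) in
  (c x 0)^* * c x 0 = (3%:R / 4%:R) ^+ k.
Proof.
elim: k f x => [|k IH] f x /=.
  rewrite adjmx1 mul1mx !mxE.
  have -> : x = 0 by apply: ord1.
  by rewrite eqxx /= conjC1 mulr1 expr0.
rewrite adjmx_cast /= castmx_mulmx2 adjmx_tens tensmx_mul castmxE.
set P := (adjmx wmx *m _).
set Q := (adjmx (Wrec k) *m _).
rewrite mxE.
set d := (mxtens_unindex (cast_ord _ x)).1.
set y := (mxtens_unindex (cast_ord _ x)).2.
set o1 := (mxtens_unindex (cast_ord _ 0)).1.
set o2 := (mxtens_unindex (cast_ord _ 0)).2.
rewrite (ord1 o1) (ord1 o2).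
have A : (P d 0)^* * P d 0 = 3%:R / 4%:R := amp (C := C) (f 0%N) d.
have B : (Q y 0)^* * Q y 0 = (3%:R / 4%:R) ^+ k := IH (fun j => f j.+1) y.
rewrite rmorphM exprS -B -A.
ring.
Qed.


Lemma unitary1 {C : numClosedFieldType} n : unitary_mx (1%:M : 'M[C]_n).
Proof. by rewrite /unitary_mx adjmx1 mulmx1. Qed.

Lemma Wrec_unitary {C : numClosedFieldType} k : unitary_mx (@Wrec C k).
Proof.
elim: k => [|k [IH1 IH2]]; first exact: unitary1.
rewrite /unitary_mx /=.
rewrite adjmx_cast /= !castmx_mulmx adjmx_tens !tensmx_mul.
have [w1 w2] := @w_unitary C.
by rewrite w1 w2 IH1 IH2 tens11 castmx1.
Qed.

Lemma unitary_castr {C : numClosedFieldType} m m' n (e : m = m') (A : 'M[C]_(m, n)) :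
  unitary_mx A -> unitary_mx (castmx (e, erefl) A).
Proof. by case: m' / e; rewrite castmx_id. Qed.

Lemma unitary_mul {C : numClosedFieldType} n (A B : 'M[C]_n) :
  unitary_mx A -> unitary_mx B -> unitary_mx (A *m B).
Proof.
move=> [A1 A2] [B1 B2]; rewrite /unitary_mx adjmxM; split.
  by rewrite mulmxA -(mulmxA _ _ A) A1 mulmx1 B1.
by rewrite mulmxA -(mulmxA _ B) B2 mulmx1 A2.
Qed.

Lemma unitary_tens {C : numClosedFieldType} m n (A : 'M[C]_m) (B : 'M[C]_n) :
  unitary_mx A -> unitary_mx B -> unitary_mx (tensmx A B).
Proof.
move=> [A1 A2] [B1 B2]; rewrite /unitary_mx adjmx_tens !tensmx_mul.
by rewrite A1 A2 B1 B2 tens11.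
Qed.

Lemma unitary_adj {C : numClosedFieldType} n (A : 'M[C]_n) :
  unitary_mx A -> unitary_mx (adjmx A).
Proof. by move=> [A1 A2]; rewrite /unitary_mx adjmxK. Qed.


Lemma adj_perm {C : numClosedFieldType} n (s : 'S_n) :
  adjmx (perm_mx s : 'M[C]_n) = perm_mx s^-1.
Proof.
rewrite /adjmx -tr_perm_mx; congr (_^T).
by apply/matrixP => i j; rewrite !mxE conjC_nat.
Qed.

Lemma unitary_perm {C : numClosedFieldType} n (s : 'S_n) :
  unitary_mx (perm_mx s : 'M[C]_n).
Proof.
rewrite /unitary_mx adj_perm -!perm_mxM mulVg mulgV.
by rewrite perm_mx1.
Qed.

Definition zord m (i : 'I_m) : 'I_m := Ordinal (leq_ltn_trans (leq0n i) (ltn_ord i)).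

Definition swp m (i j : 'I_m) : 'I_m :=
  if nat_of_ord j == 0%N then i else if nat_of_ord j == nat_of_ord i then zord i else j.

Lemma swpK m (i : 'I_m) : involutive (swp i).
Proof.
move=> j; apply: val_inj; rewrite /swp.
case: (eqVneq (nat_of_ord j) 0%N) => [j0|jn0].
  case: (eqVneq (nat_of_ord i) 0%N) => [i0|in0]; first by rewrite /= i0 j0.
  by rewrite eqxx /= j0.
case: (eqVneq (nat_of_ord j) (nat_of_ord i)) => [eji|jni] /=.
  by rewrite eji.
by rewrite (negbTE jn0) (negbTE jni).
Qed.

Lemma swp0 m (i j : 'I_m) : (nat_of_ord (swp i j) == 0%N) = (j == i).
Proof.
have -> : (j == i) = (nat_of_ord j == nat_of_ord i) by [].
rewrite /swp; case: (eqVneq (nat_of_ord j) 0%N) => [j0|jn0].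
  by rewrite j0 eq_sym.
case: (eqVneq (nat_of_ord j) (nat_of_ord i)) => [eji|jni] //=.
by rewrite (negbTE jn0).
Qed.

Definition sfun m (x : 'I_(m * m)) : 'I_(m * m) :=
  mxtens_index ((mxtens_unindex x).1, swp (mxtens_unindex x).1 (mxtens_unindex x).2).

Lemma sfunK m : involutive (@sfun m).
Proof.
move=> x; rewrite /sfun; set u := mxtens_unindex x.
rewrite mxtens_indexK /= swpK.
exact: (mxtens_unindexK x).
Qed.

Definition sperm m : 'S_(m * m) := perm (inv_inj (@sfunK m)).


Lemma sum_tens {C : numClosedFieldType} m n (F : 'I_(m * n) -> C) :
  \sum_(x < m * n) F x = \sum_(i < m) \sum_(j < n) F (mxtens_index (i, j)).
Proof.
rewrite pair_big /=.
rewrite (reindex (@mxtens_index m n)) //=.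
  by apply: eq_bigr => -[i j].
by exists (@mxtens_unindex m n) => x _; rewrite (mxtens_indexK, mxtens_unindexK).
Qed.

Lemma tens_diag {C : numClosedFieldType} m n (a : 'rV[C]_m) (b : 'rV[C]_n) :
  tensmx (diag_mx a) (diag_mx b) =
  diag_mx (\row_x (a 0 (mxtens_unindex x).1 * b 0 (mxtens_unindex x).2)).
Proof.
apply/matrixP => x y.
case: (mxtens_indexP x) => i j; case: (mxtens_indexP y) => k l.
rewrite tensmxE !mxE mxtens_indexK (can_eq (@mxtens_indexK m n)) xpair_eqE /=.
case: (i == k); case: (j == l); by rewrite /= ?mulr0n ?mulr1n ?mulr0 ?mul0r.
Qed.

Lemma unidx1 m n (i : 'I_m) (j : 'I_n) :
  Ordinal (mxtens_index_proof1 (mxtens_index (i, j))) = i.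
Proof. exact: (congr1 fst (mxtens_indexK (i, j))). Qed.
Lemma unidx2 m n (i : 'I_m) (j : 'I_n) :
  Ordinal (mxtens_index_proof2 (mxtens_index (i, j))) = j.
Proof. exact: (congr1 snd (mxtens_indexK (i, j))). Qed.

Lemma quad {C : numClosedFieldType} m (c : 'cV[C]_m) (a b : 'rV[C]_m) (z : 'I_m)
  (hz : nat_of_ord z = 0%N) :
  let v := perm_mx (sperm m) *m tensmx c (delta_mx z 0 : 'cV_m) in
  (adjmx v *m tensmx (diag_mx a) (diag_mx b) *m v) 0 0 =
  \sum_i a 0 i * b 0 i * ((c i 0)^* * c i 0).
Proof.
move=> v.
have hv : forall i j, v (mxtens_index (i, j)) 0 = c i 0 * (j == i)%:R.
  move=> i j; rewrite /v -row_permE !mxE permE /sfun mxtens_indexK /=.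
  have e1 : Ordinal (mxtens_index_proof1 (mxtens_index (i, j))) = i :=
    congr1 fst (mxtens_indexK (i, j)).
  have e2 : Ordinal (mxtens_index_proof2 (mxtens_index (i, j))) = j :=
    congr1 snd (mxtens_indexK (i, j)).
  have o1 : forall k : 'I_(1*1), Ordinal (mxtens_index_proof1 k) = 0 := fun k => ord1 _.
  have o2 : forall k : 'I_(1*1), Ordinal (mxtens_index_proof2 k) = 0 := fun k => ord1 _.
  rewrite e1 e2.
  have -> : forall x : 'I_1, c i x = c i 0 by move=> x; rewrite (ord1 x).
  have -> : forall x y : 'I_1, (x == y) = true by move=> x y; rewrite (ord1 x) (ord1 y) eqxx.
  have -> : (swp i j == z) = (nat_of_ord (swp i j) == nat_of_ord z) by [].
  rewrite hz swp0.
  by rewrite andbT.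
clearbody v.
rewrite tens_diag -mulmxA mul_diag_mx mxE sum_tens; apply: eq_bigr => i _.
rewrite (bigD1 i) //= big1 => [|j /negbTE ji].
  rewrite adjmxE !mxE hv eqxx unidx1 unidx2 mulr1 addr0.
  ring.
by rewrite adjmxE !mxE hv ji mulr0 rmorph0 mul0r.
Qed.


Lemma N_gt0 n : (0 < 4 ^ n)%N.
Proof. by rewrite expn_gt0. Qed.

Definition zo n : 'I_(4 ^ n) := Ordinal (N_gt0 n).

Definition chiv {C : numClosedFieldType} n : 'cV[C]_(4 ^ n) := delta_mx (zo n) 0.

Definition Umx {C : numClosedFieldType} n : 'M[C]_(4 ^ n * 4 ^ n * 1, 4 ^ n * 4 ^ n) :=
  castmx (esym (muln1 (4 ^ n * 4 ^ n)%N), erefl (4 ^ n * 4 ^ n)%N)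
    (perm_mx (sperm (4 ^ n)) *m tensmx (adjmx (@Wrec C n)) (1%:M : 'M[C]_(4 ^ n))).

Definition Rm {C : numClosedFieldType} (b : bool) : 'M[C]_1 := if b then 0 else 1%:M.

Lemma size_gl_eq g k f x : size (gl g k f x) == k.
Proof. by rewrite size_gl. Qed.

Definition Gt (g : bool -> nat -> bool) n (s : n.-tuple bool) (x : 'I_(4 ^ n)) : n.-tuple bool :=
  @Tuple n bool (gl g n (nth false s) x) (size_gl_eq g n (nth false s) x).

Definition Pim {C : numClosedFieldType} g n (s : n.-tuple bool) (b : bool) (e : n.-tuple bool)
  : 'M[C]_(4 ^ n) := diag_mx (\row_x ((Gt g s x == e)%:R)).

Lemma chi_unit {C : numClosedFieldType} n : unit_vector (@chiv C n).
Proof.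
rewrite /unit_vector; apply/matrixP => i j; rewrite (ord1 i) (ord1 j) !mxE.
rewrite (bigD1 (zo n)) //= big1 => [|k /negbTE kz].
  by rewrite adjmxE !mxE eqxx /= conjC1 mulr1 addr0.
by rewrite adjmxE !mxE kz /= conjC0 mul0r.
Qed.

Lemma R_proj {C : numClosedFieldType} : projective_measurement (@Rm C).
Proof.
split; first by case; rewrite /Rm ?adjmx0 ?adjmx1.
split; first by case; rewrite /Rm ?mulmx0 ?mulmx1.
by rewrite big_bool /= add0r.
Qed.

Lemma sum_ind {C : numClosedFieldType} (T : finType) (x : T) :
  \sum_(e : T) ((x == e)%:R : C) = 1.
Proof.
rewrite (bigD1 x) //= eqxx big1 ?addr0 // => e /negbTE ex.
by rewrite eq_sym ex.
Qed.

Lemma Pi_proj {C : numClosedFieldType} g n s b :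
  projective_measurement (@Pim C g n s b).
Proof.
split.
  move=> e; apply/matrixP => i j; rewrite adjmxE !mxE.
  case: (boolP (j == i)) => [/eqP->|nij]; first by rewrite eqxx !mulr1n conjC_nat.
  by rewrite eq_sym in nij; rewrite (negbTE nij) !mulr0n conjC0.
split.
  move=> e; rewrite /Pim mul_diag_mx; apply/matrixP => i j; rewrite !mxE.
  by case: (Gt g s i == e); case: (i == j); rewrite /= ?mulr1n ?mulr0n ?mulr0 ?mul1r.
apply/matrixP => i j; rewrite summxE !mxE.
under eq_bigr => e _ do rewrite !mxE.
by rewrite sumrMnl sum_ind.
Qed.


Lemma castmx_coldim {C : numClosedFieldType} m (A : 'M[C]_(m, 1 * 1)) :
  castmx (col_dim m) A = A.
Proof. by apply/matrixP => i j; rewrite castmxE; congr (A _ _); apply: val_inj. Qed.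

Lemma castmx_mull {C : numClosedFieldType} m m' n p (e : m = m') (A : 'M[C]_(m, n)) (B : 'M[C]_(n, p)) :
  castmx (e, erefl n) A *m B = castmx (e, erefl p) (A *m B).
Proof. by case: m' / e; rewrite !castmx_id. Qed.

Lemma castquad {C : numClosedFieldType} m m' (e : m = m') (v : 'M[C]_(m, 1)) (D : 'M[C]_m) :
  adjmx (castmx (e, erefl 1%N) v) *m castmx (e, e) D *m castmx (e, erefl 1%N) v =
  adjmx v *m D *m v.
Proof. by case: m' / e; rewrite !castmx_id. Qed.

Lemma term {C : numClosedFieldType} n (s r0 r1 : n.-tuple bool) :
  let Phi := @Umx C n *m castmx (col_dim _) (tensmx (Psi C s r0 r1) (chiv n)) in
  (adjmx Phi *m tensmx (tensmx (Pim g0 s false r0) (Pim g1 s false r1)) (Rm false) *m Phi) 0 0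
  = \sum_i (Gt g0 s i == r0)%:R * (Gt g1 s i == r1)%:R *
      (((adjmx (Wrec n) *m Psi C s r0 r1) i 0)^* * (adjmx (Wrec n) *m Psi C s r0 r1) i 0).
Proof.
rewrite /= castmx_coldim /Umx castmx_mull -(mulmxA (perm_mx (sperm _))) (tensmx_mul (adjmx (Wrec n)) 1%:M (Psi C s r0 r1) (chiv n)) mul1mx /Rm.
rewrite tens_mx_scalar scale1r castquad.
rewrite /Pim quad //.
by apply: eq_bigr => i _; rewrite !mxE.
Qed.


Unset Implicit Arguments.

Theorem mainTheorem2 (C : numClosedFieldType) (n : nat) : (0 < n)%N ->
  exists (dE d0 d1 d' : nat) (chi : 'cV[C]_dE)
         (U : 'M[C]_(d0 * d1 * d', 4 ^ n * dE)) (R : bool -> 'M[C]_d')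
         (Pi0 : n.-tuple bool -> bool -> n.-tuple bool -> 'M[C]_d0)
         (Pi1 : n.-tuple bool -> bool -> n.-tuple bool -> 'M[C]_d1),
    unit_vector chi /\ unitary_mx U /\ projective_measurement R /\
    (forall s b', projective_measurement (Pi0 s b')) /\
    (forall s b', projective_measurement (Pi1 s b')) /\
    p_n chi U R Pi0 Pi1 = (3%:R / 4%:R) ^+ n.
Proof.
move=> _.
exists (4 ^ n)%N, (4 ^ n)%N, (4 ^ n)%N, 1%N, (chiv n), (Umx n), Rm,
  (Pim g0 (n:=n)), (Pim g1 (n:=n)).
split; first exact: chi_unit.
split.
  rewrite /Umx; apply: unitary_castr; apply: unitary_mul; first exact: unitary_perm.
  apply: unitary_tens; last exact: unitary1.
  exact/unitary_adj/Wrec_unitary.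
split; first exact: R_proj.
split; first by move=> s b; apply: Pi_proj.
split; first by move=> s b; apply: Pi_proj.
rewrite /p_n.
set K := (3%:R / 4%:R : C) ^+ n.
have E : forall r0 r1 s : n.-tuple bool,
  (\sum_(b' : bool)
    let Phi := Umx n *m castmx (col_dim _) (tensmx (Psi C s r0 r1) (chiv n)) in
    let r := fun b : bool => if b then r1 else r0 in
    (adjmx Phi *m (tensmx (tensmx (Pim g0 s b' (r b')) (Pim g1 s b' (r (~~ b'))))
                          (Rm b')) *m Phi) 0 0)
  = \sum_i (Gt g0 s i == r0)%:R * (Gt g1 s i == r1)%:R * K.
  move=> r0 r1 s; rewrite big_bool /= tensmx0 mulmx0 mul0mx mxE add0r.
  rewrite (term s r0 r1); apply: eq_bigr => i _.
  case: (eqVneq (Gt g0 s i) r0) => [<-|]; last by rewrite !mul0r.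
  case: (eqVneq (Gt g1 s i) r1) => [<-|]; last by rewrite !mulr0 !mul0r.
  by rewrite (key (C := C) (nth false s) i).
under eq_bigr => r0 _ do under eq_bigr => r1 _ do under eq_bigr => s _ do rewrite E.
rewrite (eq_bigr (fun r0 => \sum_(s : n.-tuple bool) \sum_(r1 : n.-tuple bool) \sum_i
   (Gt g0 s i == r0)%:R * (Gt g1 s i == r1)%:R * K)); last by move=> r0 _; rewrite exchange_big.
rewrite exchange_big /=.
rewrite (eq_bigr (fun s : n.-tuple bool => \sum_(i < 4 ^ n) K)); last first.
  move=> s _.
  rewrite (eq_bigr (fun r0 => \sum_(i < 4 ^ n) \sum_(r1 : n.-tuple bool)
     (Gt g0 s i == r0)%:R * (Gt g1 s i == r1)%:R * K)); last by move=> r0 _; rewrite exchange_big.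
  rewrite exchange_big /=; apply: eq_bigr => i _.
  under eq_bigr => r0 _ do under eq_bigr => r1 _ do rewrite mulrAC.
  under eq_bigr => r0 _ do rewrite -mulr_sumr sum_ind mulr1.
  by rewrite -mulr_suml sum_ind mul1r.
rewrite sumr_const sumr_const card_ord card_tuple card_bool.
rewrite -mulrnA -[K *+ _]mulr_natr natrM !natrX.
have h : (2 : C) ^+ (3 * n) = 4%:R ^+ n * 2%:R ^+ n.
  by rewrite exprM -exprMn -natrX -natrM.
have nz : 4%:R ^+ n * 2%:R ^+ n != 0 :> C.
  by rewrite mulf_neq0 // expf_neq0 // pnatr_eq0.
by rewrite h mulrC -mulrA mulfV // mulr1.
Qed.
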